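(* Let $N\ge3$, $K\ge2$, $1\le L<N-1$ be integers, $M=N(L+1)^{K-1}$, $d_m=L$ for $m\in[1:N]$ and $d_m=L+1$ for $m\in[N+1:M]$, $C=\left(\sum_{k=0}^{K-1}N^{-k}\right)^{-1}$, and $1\le D\le1/C$. Let $\mathcal{F}_D$ be the set of probability vectors $P$ on $[1:M]$ with $\frac1L\sum_{m=1}^Mp_md_m=D$ and $U$ the uniform distribution on $[1:M]$. Then $\rho^{alt}_\alpha:=\min_{P\in\mathcal{F}_D}D_\alpha(P\|U)$ equals, for $0<\alpha<\infty$, $\alpha\ne1$, $$\rho^{alt}_\alpha=\frac{1}{\alpha-1}\log\left[N\left(\frac{1-L(D-1)}{N}\right)^{\alpha}+\big(N(L+1)^{K-1}-N\big)\left(\frac{L(D-1)}{N(L+1)^{K-1}-N}\right)^{\alpha}\right]+\log N(L+1)^{K-1};$$ for $\alpha=1$, $$\rho^{alt}_1=\{1-L(D-1)\}\log\frac{1-L(D-1)}{N}+L(D-1)\log\frac{L(D-1)}{N(L+1)^{K-1}-N}+\log N(L+1)^{K-1};$$ and for $\alpha=\infty$, $$\rho^{alt}_\infty=\log\frac{1-L(D-1)}{N}+\log N(L+1)^{K-1}.$$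
   Context: Notation: $[i:j]=\{i,\dots,j\}$; natural logarithms with $0\log0=0$. Rényi divergence for probability vectors $P,U$ on $[1:M]$ with $u_m>0$: $D_\alpha(P\|U)=\frac{1}{\alpha-1}\log\sum_m p_m^\alpha u_m^{1-\alpha}$ for $0<\alpha<\infty,\alpha\ne1$; $D_1(P\|U)=\sum_m p_m\log\frac{p_m}{u_m}$; $D_\infty(P\|U)=\log\max_m\frac{p_m}{u_m}$. (Interpretation: optimal leakage–download-cost tradeoff for the paper's alternative PIR scheme with $N$ databases, $K$ messages and message length $L$.) *)

(* Defs.v *)
From mathcomp Require Import all_boot all_order all_algebra.
From mathcomp Require Import all_classical all_reals all_analysis.
Unset Printing Implicit Defensive.
Import Order.TTheory GRing.Theory Num.Theory.
Local Open Scope ring_scope.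
Local Open Scope classical_set_scope.

Section Defs.
Context {R : realType}.

(* Index set [1:M] is rendered as 'I_M, with m : 'I_M standing for m+1. *)

Definition renyi {M : nat} (alpha : R) (P U : 'I_M -> R) : R :=
  (alpha - 1)^-1 * ln (\sum_(m < M) P m `^ alpha * U m `^ (1 - alpha)).

(* order 1: KL divergence, with 0 log 0 = 0 (ln 0 = 0 in the library) *)
Definition renyi1 {M : nat} (P U : 'I_M -> R) : R :=
  \sum_(m < M) P m * ln (P m / U m).

Definition renyi_inf {M : nat} (P U : 'I_M -> R) : R :=
  ln (\big[Num.max/0]_(m < M) (P m / U m)).

Definition prob_vec {M : nat} (P : 'I_M -> R) : Prop :=
  (forall m, 0 <= P m) /\ \sum_(m < M) P m = 1.

Definition unif {M : nat} : 'I_M -> R := fun _ => (M%:R)^-1.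

End Defs.

Definition Mval (N K L : nat) : nat := (N * (L.+1) ^ (K.-1))%N.

(* d_m = L for m in [1:N] (indices 0..N-1), L+1 otherwise *)
Definition dcost {R : realType} (N L : nat) {M : nat} (m : 'I_M) : R :=
  if (m < N)%N then L%:R else (L.+1)%:R.

Definition Cconst {R : realType} (N K : nat) : R :=
  (\sum_(k < K) (N%:R ^- k))^-1.

Definition FD {R : realType} (N K L : nat) (D : R) : set ('I_(Mval N K L) -> R) :=
  [set P | prob_vec P /\
           (L%:R)^-1 * \sum_(m < Mval N K L) P m * dcost N L m = D].

Definition is_min {T : Type} {R : realType} (S : set T) (f : T -> R) (v : R) : Prop :=
  (exists2 x, S x & f x = v) /\ (forall x, S x -> v <= f x).

(* Main.v *)
Require Import Defs.
From mathcomp Require Import all_boot all_order all_algebra.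
From mathcomp Require Import all_classical all_reals all_analysis.
From mathcomp Require Import ring lra zify.
Import Order.TTheory GRing.Theory Num.Theory.
Local Open Scope ring_scope.
Local Open Scope classical_set_scope.
Section Helpers.
Context {R : realType}.

Lemma young_gt1 (a x c : R) : 1 < a -> 0 <= x -> 0 <= c ->
  x * (a * c `^ (a - 1)) <= x `^ a + (a - 1) * c `^ a.
Proof.
move=> a1 x0 c0.
have a0 : 0 < a by lra.
have a10 : 0 < a - 1 by lra.
have b0 : 0 < a / (a - 1) by rewrite divr_gt0.
have := @conjugate_powR R x (c `^ (a - 1)) a (a / (a - 1)) x0 (powR_ge0 _ _) a0 b0.
rewrite -powRrM.
have -> : (a - 1) * (a / (a - 1)) = a by field; rewrite subr_eq0 gt_eqF.
rewrite invf_div.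
have h1 : a^-1 + (a - 1) / a = 1 by field; rewrite gt_eqF.
move=> /(_ h1) H.
have E1 : x * (a * c `^ (a-1)) = a * (x * c `^ (a-1)) by ring.
have E2 : x `^ a + (a-1) * c `^ a = a * (x `^ a / a + c `^ a * ((a - 1) / a)).
  by field; rewrite gt_eqF.
by rewrite E1 E2 ler_pM2l.
Qed.


Lemma young_lt1 (a x c : R) : 0 < a -> a < 1 -> 0 <= x -> 0 <= c ->
  x `^ a * c `^ (1 - a) <= a * x + (1 - a) * c.
Proof.
move=> a0 a1 x0 c0.
have b0 : 0 < 1 - a by lra.
have := @conjugate_powR R (x `^ a) (c `^ (1 - a)) a^-1 (1 - a)^-1
  (powR_ge0 _ _) (powR_ge0 _ _) (_ : 0 < a^-1) (_ : 0 < (1-a)^-1).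
rewrite ?invr_gt0 // !invrK -!powRrM !mulfV ?gt_eqF // !powRr1 //.
have h1 : a + (1 - a) = 1 by ring.
move=> /(_ a0 b0 h1) H; apply: le_trans H _; lra.
Qed.

Lemma sum_const_mul (I : finType) (P : pred I) (k : R) :
  \sum_(i | P i) k = (\sum_(i | P i) 1) * k.
Proof. by rewrite mulr_suml; apply: eq_bigr => i _; rewrite mul1r. Qed.

Lemma group_zero (I : finType) (P : pred I) (x : I -> R) :
  (forall i, P i -> 0 <= x i) -> \sum_(i | P i) x i = \sum_(i | P i) (0:R) ->
  forall i, P i -> x i = 0.
Proof. by move=> hx; rewrite big1_eq => /psumr_eq0P; apply. Qed.

Lemma group_gt1 (I : finType) (P : pred I) (x : I -> R) (c a : R) :
  1 < a -> (forall i, P i -> 0 <= x i) -> 0 <= c ->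
  \sum_(i | P i) x i = \sum_(i | P i) c ->
  \sum_(i | P i) c `^ a <= \sum_(i | P i) x i `^ a.
Proof.
move=> a1 hx c0 hs.
have a0 : 0 < a by lra.
have [c00|cp] := eqVneq c 0.
  rewrite c00 in hs; have hz := @group_zero _ _ _ hx hs.
  rewrite c00; apply/ler_sum => i hi; rewrite hz //.
have H : \sum_(i | P i) x i * (a * c `^ (a - 1)) <=
         \sum_(i | P i) (x i `^ a + (a - 1) * c `^ a).
  by apply: ler_sum => i hi; apply: young_gt1 => //; apply: hx.
rewrite big_split /= -mulr_suml hs sum_const_mul in H.
rewrite sum_const_mul [X in _ <= _ + X]sum_const_mul in H.
rewrite sum_const_mul.
have hc : c * (a * c `^ (a - 1)) = a * c `^ a.
  by rewrite mulrCA mulr_powRB1.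
move: H; rewrite -mulrA hc.
set n := \sum_(i | P i) (1:R); set T := \sum_(i | P i) x i `^ a.
set e := c `^ a.
move=> H; lra.
Qed.

Lemma group_lt1 (I : finType) (P : pred I) (x : I -> R) (c a : R) :
  0 < a -> a < 1 -> (forall i, P i -> 0 <= x i) -> 0 <= c ->
  \sum_(i | P i) x i = \sum_(i | P i) c ->
  \sum_(i | P i) x i `^ a <= \sum_(i | P i) c `^ a.
Proof.
move=> a0 a1 hx c0 hs.
have [c00|cp] := eqVneq c 0.
  rewrite c00 in hs; have hz := @group_zero _ _ _ hx hs.
  rewrite c00; apply/ler_sum => i hi; rewrite hz //.
have cpos : 0 < c by rewrite lt_neqAle eq_sym cp.
have H : \sum_(i | P i) x i `^ a * c `^ (1 - a) <=
         \sum_(i | P i) (a * x i + (1 - a) * c).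
  by apply: ler_sum => i hi; apply: young_lt1 => //; apply: hx.
rewrite big_split /= -mulr_suml -mulr_sumr hs in H.
rewrite [X in _ <= _ * X + _]sum_const_mul [X in _ <= _ + X]sum_const_mul in H.
rewrite [X in _ <= X]sum_const_mul.
have hc : c = c `^ a * c `^ (1 - a).
  rewrite -powRD; first by rewrite addrC subrK powRr1 // ltW.
  by apply/implyP => _; rewrite cp.
have hp : 0 < c `^ (1 - a) by rewrite powR_gt0.
rewrite -(ler_pM2r hp).
move: H.
set n := \sum_(i | P i) (1:R); set T := \sum_(i | P i) x i `^ a.
set e := c `^ a; set f := c `^ (1 - a).
move=> H.
have -> : n * e * f = n * c by rewrite hc -/e -/f; ring.
apply: le_trans H _; rewrite le_eqVlt; apply/orP; left; apply/eqP; ring.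
Qed.


Lemma kl_point (x c u : R) : 0 <= x -> 0 < c -> 0 < u ->
  (x - c) + x * ln (c / u) <= x * ln (x / u).
Proof.
move=> x0 c0 u0.
have [->|xp] := eqVneq x 0; first by rewrite !mul0r sub0r addr0 oppr_le0 ltW.
have xpos : 0 < x by rewrite lt_neqAle eq_sym xp.
rewrite !ln_div ?posrE //.
have h : ln (c / x) <= c / x - 1.
  have := @le_ln1Dx R (c / x - 1).
  have -> : 1 + (c / x - 1) = c / x by ring.
  apply.
  have : 0 < c / x by rewrite divr_gt0.
  lra.
rewrite ln_div ?posrE // in h.
have h2 : x * (ln c - ln x) <= x * (c / x - 1) by rewrite ler_pM2l.
have e : x * (c / x - 1) = c - x by field; rewrite gt_eqF.
rewrite e in h2.
lra.
Qed.

Lemma group_kl (I : finType) (P : pred I) (x : I -> R) (c u : R) :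
  (forall i, P i -> 0 <= x i) -> 0 <= c -> 0 < u ->
  \sum_(i | P i) x i = \sum_(i | P i) c ->
  \sum_(i | P i) c * ln (c / u) <= \sum_(i | P i) x i * ln (x i / u).
Proof.
move=> hx c0 u0 hs.
have [c00|cp] := eqVneq c 0.
  rewrite c00 in hs; have hz := @group_zero _ _ _ hx hs.
  rewrite c00; apply/ler_sum => i hi; rewrite hz //.
have cpos : 0 < c by rewrite lt_neqAle eq_sym cp.
have H : \sum_(i | P i) ((x i - c) + x i * ln (c / u)) <=
         \sum_(i | P i) x i * ln (x i / u).
  by apply: ler_sum => i hi; apply: kl_point => //; apply: hx.
apply: le_trans H.
rewrite big_split /= sumrB hs subrr add0r.
rewrite -!(mulr_suml _ _ _ (ln (c / u))) hs //.
Qed.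

Lemma le_bigmax_r (n : nat) (F : 'I_n -> R) (i : 'I_n) :
  F i <= \big[Num.max/0]_(m < n) F m.
Proof. by rewrite (bigD1 i) //= le_max lexx. Qed.

Lemma bigmax_le_r (n : nat) (F : 'I_n -> R) (b : R) :
  0 <= b -> (forall m, F m <= b) -> \big[Num.max/0]_(m < n) F m <= b.
Proof.
move=> b0 hF; elim/big_ind: _ => //.
by move=> x y hx hy; rewrite ge_max hx hy.
Qed.

Lemma le_sum_term (I : finType) (F : I -> R) (i : I) :
  (forall m, 0 <= F m) -> F i <= \sum_m F m.
Proof. by move=> hF; rewrite (bigD1 i) //= lerDl sumr_ge0. Qed.

Lemma geo_sum (Lr y : R) (n : nat) : y * (Lr + 1) = 1 ->
  Lr * \sum_(k < n) y ^+ k.+1 = 1 - y ^+ n.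
Proof.
move=> hy; elim: n => [|n IH]; first by rewrite big_ord0 mulr0 expr0 subrr.
rewrite big_ord_recr /= mulrDr IH !exprS.
have : Lr * y = 1 - y by move: hy; rewrite mulrDr mulr1 => hy; lra.
move=> h.
have -> : Lr * (y * y ^+ n) = (Lr * y) * y ^+ n by ring.
rewrite h; ring.
Qed.

End Helpers.
Theorem theorem2 (R : realType) (N K L : nat) (D : R) :
  (3 <= N)%N -> (2 <= K)%N -> (1 <= L)%N -> (L < N - 1)%N ->
  1 <= D -> D <= (Cconst N K)^-1 ->
  let M := Mval N K L in
  let q : R := L%:R * (D - 1) in
  (forall alpha : R, 0 < alpha -> alpha != 1 ->
     is_min (FD N K L D) (fun P => renyi alpha P unif)
       ((alpha - 1)^-1 *
          ln (N%:R * ((1 - q) / N%:R) `^ alpha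
              + (M%:R - N%:R) * (q / (M%:R - N%:R)) `^ alpha)
        + ln M%:R)) /\
  is_min (FD N K L D) (fun P => renyi1 P unif)
    ((1 - q) * ln ((1 - q) / N%:R) + q * ln (q / (M%:R - N%:R)) + ln M%:R) /\
  is_min (FD N K L D) (fun P => renyi_inf P unif)
    (ln ((1 - q) / N%:R) + ln M%:R).
Proof.
case: K => [|[|K']] hN hK //.
move=> hL hLN hD1 hDC M q.
have hMn : M = (N * L.+1 ^ K'.+1)%N by [].
have hY1 : (1 <= L.+1 ^ K')%N by rewrite expn_gt0.
have hNM : (N < M)%N.
  rewrite hMn expnS; move: hY1; set Z := (L.+1 ^ K')%N => hY1; nia.
set Y : R := (L.+1)%:R ^+ K'.+1.
have hMr : (M%:R : R) = N%:R * Y by rewrite hMn natrM natrX.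
have Npos : (0:R) < N%:R by rewrite ltr0n; lia.
have Lpos : (0:R) < L%:R by rewrite ltr0n; lia.
have Ypos : (0:R) < Y by rewrite exprn_gt0 // ltr0n.
have MNpos : (0:R) < M%:R - N%:R by rewrite subr_gt0 ltr_nat.
have Mpos : (0:R) < M%:R by rewrite ltr0n; lia.
set y : R := ((L.+1)%:R)^-1.
have hy : y * (L%:R + 1) = 1 by rewrite natr1 mulVf // pnatr_eq0.
have hC : (Cconst N K'.+2 : R)^-1 = \sum_(k < K'.+2) N%:R ^- k by rewrite /Cconst invrK.
have hsum : \sum_(k < K'.+2) (N%:R : R) ^- k <= 1 + \sum_(k < K'.+1) y ^+ k.+1.
  rewrite big_ord_recl /= expr0 invr1 lerD2l; apply: ler_sum => k _.
  rewrite -exprVn /bump /= add1n; apply: lerXn2r; rewrite ?nnegrE ?invr_ge0 ?ler0n //.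
  rewrite lef_pV2 ?posrE ?ltr0n; [|lia|lia].
  rewrite ler_nat; lia.
have hgeo := @geo_sum R L%:R y K'.+1 hy.
have hq0 : 0 <= q by rewrite /q mulr_ge0 ?ler0n // subr_ge0.
have hq1 : q <= 1 - y ^+ K'.+1.
  rewrite -hgeo /q ler_wpM2l ?ler0n //.
  move: hDC; rewrite hC => hDC; lra.
have hYy : y ^+ K'.+1 * Y = 1 by rewrite /Y -exprMn mulVf ?expr1n // pnatr_eq0.
have hqM : q * M%:R <= M%:R - N%:R.
  have h1 : q * Y <= (1 - y ^+ K'.+1) * Y by rewrite ler_pM2r.
  rewrite mulrBl mul1r hYy in h1.
  rewrite hMr; have := ler_pM2l Npos (q * Y) (Y - 1); rewrite h1 => /esym h2.
  move: h2; rewrite mulrBr mulr1 => h2; by rewrite mulrCA -h2.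
have hq_lt1 : q < 1.
  have : q * M%:R < 1 * M%:R by lra.
  by rewrite ltr_pM2r.
set cA : R := (1 - q) / N%:R.
set cB : R := q / (M%:R - N%:R).
have cApos : 0 < cA by rewrite divr_gt0 // subr_gt0.
have cB0 : 0 <= cB by rewrite divr_ge0 // ltW.
have cBA : cB <= cA.
  rewrite /cB /cA ler_pdivrMr // mulrAC ler_pdivlMr //; lra.
have hNcA : N%:R * cA = 1 - q by rewrite /cA; field; rewrite gt_eqF.
have hMcB : (M%:R - N%:R) * cB = q by rewrite /cB; field; rewrite gt_eqF.
have nA : \sum_(m < M | (m < N)%N) (1:R) = N%:R.
  rewrite -(big_mkord (fun m => (m < N)%N) (fun=> (1:R))).
  rewrite -(big_nat_widen 0 N M xpredT (fun=> (1:R)) (ltnW hNM)) /=.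
  by rewrite sumr_const_nat subn0.
have hsplit : forall F : 'I_M -> R, \sum_(m < M) F m =
    \sum_(m < M | (m < N)%N) F m + \sum_(m < M | ~~ (m < N)%N) F m.
  by move=> F; rewrite (bigID (fun m : 'I_M => (m < N)%N)).
have nB : \sum_(m < M | ~~ (m < N)%N) (1:R) = M%:R - N%:R.
  have := hsplit (fun=> 1); rewrite sumr_const card_ord nA => ->; ring.
have hdsum : forall P : 'I_M -> R, \sum_(m < M) P m * dcost N L m =
    L%:R * \sum_(m < M | (m < N)%N) P m + (L%:R + 1) * \sum_(m < M | ~~ (m < N)%N) P m.
  move=> P; rewrite hsplit !mulr_sumr; congr (_ + _); apply: eq_bigr => m hm.
    by rewrite /dcost hm mulrC.
  by rewrite /dcost (negbTE hm) -natr1 mulrC.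
have hFD : forall P, FD N K'.+2 L D P -> [/\ (forall m, 0 <= P m), \sum_m P m = 1,
    \sum_(m < M | (m < N)%N) P m = 1 - q & \sum_(m < M | ~~ (m < N)%N) P m = q].
  move=> P [[hP0 hP1] hd].
  move: hd; rewrite hdsum => hd.
  have hd2 : L%:R * \sum_(m < M | (m < N)%N) P m + (L%:R + 1) * \sum_(m < M | ~~ (m < N)%N) P m = L%:R * D.
    by rewrite -hd mulrA mulfV ?mul1r // gt_eqF.
  move: (hP1); rewrite hsplit => hP2.
  have hL1 : L%:R * \sum_(m < M | (m < N)%N) P m + L%:R * \sum_(m < M | ~~ (m < N)%N) P m = L%:R.
    by rewrite -mulrDr hP2 mulr1.
  split => //; rewrite /q mulrBr mulr1; lra.
pose Ps : 'I_M -> R := fun m => if (m < N)%N then cA else cB.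
have hPsA : forall f : R -> R, \sum_(m < M | (m < N)%N) f (Ps m) = N%:R * f cA.
  move=> f; rewrite (eq_bigr (fun=> f cA)); last by move=> m hm; rewrite /Ps hm.
  by rewrite sum_const_mul nA.
have hPsB : forall f : R -> R, \sum_(m < M | ~~ (m < N)%N) f (Ps m) = (M%:R - N%:R) * f cB.
  move=> f; rewrite (eq_bigr (fun=> f cB)); last by move=> m hm; rewrite /Ps (negbTE hm).
  by rewrite sum_const_mul nB.
have hPs : FD N K'.+2 L D Ps.
  split; [split|].
  - by move=> m; rewrite /Ps; case: ifP => _ //; apply: ltW.
  - rewrite hsplit (hPsA id) (hPsB id) /= hNcA hMcB; ring.
  - by rewrite hdsum (hPsA id) (hPsB id) /= hNcA hMcB /q; field; rewrite gt_eqF.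
have eqA : forall P, FD N K'.+2 L D P ->
    \sum_(m < M | (m < N)%N) P m = \sum_(m < M | (m < N)%N) cA.
  by move=> P /hFD [_ _ -> _]; rewrite sum_const_mul nA hNcA.
have eqB : forall P, FD N K'.+2 L D P ->
    \sum_(m < M | ~~ (m < N)%N) P m = \sum_(m < M | ~~ (m < N)%N) cB.
  by move=> P /hFD [_ _ _ ->]; rewrite sum_const_mul nB hMcB.
have hle1 : forall P, FD N K'.+2 L D P -> forall m, P m <= 1.
  move=> P hP m; have [hP0 hP1 _ _] := hFD P hP; rewrite -hP1.
  exact: le_sum_term.
have hM0 : (0 < M)%N by apply: leq_ltn_trans (leq0n N) hNM.
have hN0 : (0 < N)%N by apply: leq_ltn_trans (leq0n 2) hN.
pose m0 : 'I_M := Ordinal hM0.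
have hPs0 : Ps m0 = cA by rewrite /Ps /= hN0.
split.
  move=> a a0 a1.
  have hren : forall P : 'I_M -> R, 0 < \sum_m P m `^ a ->
      renyi a P unif = (a - 1)^-1 * ln (\sum_m P m `^ a) + ln M%:R.
    move=> P hT; rewrite /renyi /unif -mulr_suml lnM ?posrE ?powR_gt0 ?invr_gt0 //.
    rewrite ln_powR lnV ?posrE //.
    have a10 : a - 1 != 0 by rewrite subr_eq0.
    by field.
  have hSs : \sum_m Ps m `^ a = N%:R * cA `^ a + (M%:R - N%:R) * cB `^ a.
    by rewrite hsplit (hPsA (fun x => x `^ a)) (hPsB (fun x => x `^ a)).
  have hSpos : 0 < N%:R * cA `^ a + (M%:R - N%:R) * cB `^ a.
    have h1 : 0 < N%:R * cA `^ a by rewrite mulr_gt0 // powR_gt0.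
    have h2 : 0 <= (M%:R - N%:R) * cB `^ a by rewrite mulr_ge0 ?powR_ge0 // ltW.
    lra.
  split; first by exists Ps => //; rewrite hren hSs.
  move=> P hP; have [hP0 hP1 hsA hsB] := hFD P hP.
  have gA := eqA P hP; have gB := eqB P hP.
  have [a_lt1|a_gt1] : a < 1 \/ 1 < a by move: a1; rewrite neq_lt => /orP.
  - have hA := @group_lt1 _ _ _ _ _ _ a0 a_lt1 (fun m _ => hP0 m) (ltW cApos) gA.
    have hB := @group_lt1 _ _ _ _ _ _ a0 a_lt1 (fun m _ => hP0 m) cB0 gB.
    have hT : \sum_m P m `^ a <= N%:R * cA `^ a + (M%:R - N%:R) * cB `^ a.
      rewrite hsplit; rewrite (sum_const_mul _ _ (_ `^ a)) nA in hA.
      rewrite (sum_const_mul _ _ (_ `^ a)) nB in hB.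
      exact: lerD.
    have hT1 : 1 <= \sum_m P m `^ a.
      rewrite -hP1; apply: ler_sum => m _.
      have [->|pm] := eqVneq (P m) 0; first by rewrite powR_ge0.
      apply: ger1_powR; last exact: ltW.
      by rewrite lt_neqAle eq_sym pm hP0 hle1.
    rewrite hren; last by lra.
    rewrite lerD2r; apply: ler_wnM2l.
      by rewrite invr_le0 subr_le0 ltW.
    by rewrite ler_ln ?posrE //; lra.
  - have hA := @group_gt1 _ _ _ _ _ _ a_gt1 (fun m _ => hP0 m) (ltW cApos) gA.
    have hB := @group_gt1 _ _ _ _ _ _ a_gt1 (fun m _ => hP0 m) cB0 gB.
    have hT : N%:R * cA `^ a + (M%:R - N%:R) * cB `^ a <= \sum_m P m `^ a.
      rewrite hsplit; rewrite (sum_const_mul _ _ (_ `^ a)) nA in hA.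
      rewrite (sum_const_mul _ _ (_ `^ a)) nB in hB.
      exact: lerD.
    rewrite hren; last by lra.
    rewrite lerD2r; apply: ler_wpM2l.
      by rewrite invr_ge0 subr_ge0 ltW.
    by rewrite ler_ln ?posrE //; lra.
have uinv : 0 < (M%:R : R)^-1 by rewrite invr_gt0.
split.
  have hren1 : forall P : 'I_M -> R, renyi1 P unif =
      \sum_(m < M | (m < N)%N) P m * ln (P m / M%:R^-1) +
      \sum_(m < M | ~~ (m < N)%N) P m * ln (P m / M%:R^-1).
    by move=> P; rewrite /renyi1 /unif hsplit.
  have hcl : forall c : R, 0 <= c -> c * ln (c / M%:R^-1) = c * ln c + c * ln M%:R.
    move=> c c0; have [->|cp] := eqVneq c 0; first by rewrite !mul0r addr0.
    have cpos : 0 < c by rewrite lt_neqAle eq_sym cp.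
    by rewrite invrK lnM ?posrE // mulrDr.
  have e : (1 - q) * ln cA + q * ln cB + ln M%:R =
      N%:R * (cA * ln cA + cA * ln M%:R) + (M%:R - N%:R) * (cB * ln cB + cB * ln M%:R).
    transitivity ((N%:R * cA) * ln cA + (N%:R * cA) * ln M%:R +
      ((M%:R - N%:R) * cB) * ln cB + ((M%:R - N%:R) * cB) * ln M%:R); last by ring.
    rewrite hNcA hMcB; ring.
  split.
    exists Ps => //.
    rewrite hren1 (hPsA (fun x => x * ln (x / M%:R^-1))) (hPsB (fun x => x * ln (x / M%:R^-1))) /=.
    by rewrite !hcl // ?e //; apply: ltW.
  move=> P hP; have [hP0 _ _ _] := hFD P hP.
  have uA := @group_kl _ _ _ _ cA (M%:R^-1) (fun m _ => hP0 m) (ltW cApos) uinv (eqA P hP).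
  have uB := @group_kl _ _ _ _ cB (M%:R^-1) (fun m _ => hP0 m) cB0 uinv (eqB P hP).
  rewrite (sum_const_mul _ _ (cA * _)) nA hcl in uA; last exact: ltW.
  rewrite (sum_const_mul _ _ (cB * _)) nB hcl in uB; last exact: cB0.
  by rewrite hren1 e; apply: lerD.
have hri : forall P : 'I_M -> R, renyi_inf P unif =
    ln (\big[Num.max/0]_(m < M) (P m * M%:R)).
  by move=> P; rewrite /renyi_inf /unif; under eq_bigr => m _ do rewrite invrK.
have hv : ln (cA * M%:R) = ln cA + ln M%:R by rewrite lnM ?posrE.
split.
  exists Ps => //; rewrite hri -hv; congr ln; apply/le_anti/andP; split.
    apply: bigmax_le_r; first by rewrite mulr_ge0 // ltW.
    by move=> m; rewrite ler_pM2r // /Ps; case: ifP.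
  by rewrite -hPs0; apply: (le_bigmax_r _ (fun m => Ps m * M%:R) m0).
move=> P hP; have [hP0 _ hsA _] := hFD P hP.
have hb : cA * M%:R <= \big[Num.max/0]_(m < M) (P m * M%:R).
  have : \sum_(m < M | (m < N)%N) P m * M%:R <=
      \sum_(m < M | (m < N)%N) \big[Num.max/0]_(m < M) (P m * M%:R).
    by apply: ler_sum => m _; apply: (le_bigmax_r _ (fun m => P m * M%:R) m).
  rewrite -mulr_suml hsA sum_const_mul nA -hNcA -mulrA ler_pM2l //.
have hcm : 0 < cA * M%:R by rewrite mulr_gt0.
rewrite hri -hv ler_ln ?posrE //.
exact: lt_le_trans hcm hb.
Qed.
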